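(* Let $n\ge 3$ and let $S=[A_0,\dots,A_n]$ be an $n$-pre-kite which is not a regular $n$-simplex. Then $S$ has at most two apexes.
   Context: An $n$-simplex is the convex hull of $n+1$ affinely independent points in a Euclidean space; its $j$-th facet $S_j$ is the $(n-1)$-simplex obtained by removing the vertex $A_j$. An $n$-simplex is an $n$-pre-kite if at least one facet $S_j$ is a regular $(n-1)$-simplex (all edges of equal length); the corresponding vertex $A_j$ is called an apex. *)

(* Defs.v *)
From HB Require Import structures.
From mathcomp Require Import all_boot all_order all_algebra.
Set Implicit Arguments. Unset Strict Implicit. Unset Printing Implicit Defensive.
Import Order.TTheory GRing.Theory Num.Theory.
Local Open Scope ring_scope.

Definition edist (R : rcfType) (m : nat) (x y : 'rV[R]_m) : R :=
  Num.sqrt (((x - y) *m (x - y)^T) 0 0).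

Definition affinely_independent (R : rcfType) (m n : nat)
  (A : 'I_n.+1 -> 'rV[R]_m) : bool :=
  row_free (\matrix_(i < n) (A (lift ord0 i) - A ord0)).

Definition regular_simplex (R : rcfType) (m n : nat)
  (A : 'I_n.+1 -> 'rV[R]_m) : Prop :=
  forall i j k l : 'I_n.+1, i != j -> k != l -> edist (A i) (A j) = edist (A k) (A l).

Definition is_apex (R : rcfType) (m n : nat)
  (A : 'I_n.+1 -> 'rV[R]_m) (j : 'I_n.+1) : bool :=
  [forall i1 : 'I_n.+1, forall i2 : 'I_n.+1, forall k1 : 'I_n.+1, forall k2 : 'I_n.+1,
    [&& i1 != j, i2 != j, k1 != j, k2 != j, i1 != i2 & k1 != k2] ==>
    (edist (A i1) (A i2) == edist (A k1) (A k2))].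

Definition pre_kite (R : rcfType) (m n : nat) (A : 'I_n.+1 -> 'rV[R]_m) : Prop :=
  affinely_independent A /\ exists j, is_apex A j.

Definition apexes (R : rcfType) (m n : nat) (A : 'I_n.+1 -> 'rV[R]_m) : {set 'I_n.+1} :=
  [set j | is_apex A j].

(* Main.v *)
Require Import Defs.
From HB Require Import structures.
From mathcomp Require Import all_boot all_order all_algebra.
Import Order.TTheory GRing.Theory Num.Theory.
Local Open Scope ring_scope.

Lemma apexE (R : rcfType) (m n : nat) (A : 'I_n.+1 -> 'rV[R]_m) (j i1 i2 k1 k2 : 'I_n.+1) :
  is_apex A j -> i1 != j -> i2 != j -> k1 != j -> k2 != j -> i1 != i2 -> k1 != k2 ->
  edist (A i1) (A i2) = edist (A k1) (A k2).
Proof.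
move=> /forallP /(_ i1) /forallP /(_ i2) /forallP /(_ k1) /forallP /(_ k2) /implyP H.
move=> *; apply/eqP/H; apply/and5P; split=> //; exact/andP.
Qed.
Arguments apexE {R m n A j i1 i2 k1 k2}.

Theorem lemma5p1 (R : rcfType) (m n : nat) (A : 'I_n.+1 -> 'rV[R]_m) :
  (3 <= n)%N -> pre_kite A -> ~ regular_simplex A ->
  (#|apexes A| <= 2)%N.
Proof.
move=> n3 _ Hreg; rewrite leqNgt; apply/negP => /card_gt2P [a [b [c [[Ha Hb Hc] [ab bc ca]]]]].
apply: Hreg.
rewrite !inE in Ha Hb Hc.
have : ~~ ([set: 'I_n.+1] \subset [:: a; b; c]).
  apply/negP => /subset_leq_card; rewrite cardsT card_ord.
  move=> H; have := leq_trans H (card_size _) => /= H2.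
  by move: n3; rewrite ltnNge -ltnS H2.
case/subsetPn => d _; rewrite !inE !negb_or => /and3P [da db dc].
pose f x y := edist (A x) (A y).
have Ea : forall i j, i != a -> j != a -> i != j -> f i j = f c d.
  move=> i j ia ja ij; apply: (apexE Ha) => //; try by rewrite eq_sym.
have Eb : forall i j, i != b -> j != b -> i != j -> f i j = f c d.
  move=> i j ib jb ij; apply: (apexE Hb) => //; try by rewrite eq_sym.
have Ec : forall i j, i != c -> j != c -> i != j -> f i j = f c d.
  move=> i j ic jc ij; rewrite /f (apexE Hc ic jc (_ : b != c) dc ij) //; last by rewrite eq_sym.
  by apply: Ea => //; rewrite eq_sym.
have E : forall i j, i != j -> f i j = f c d.
  move=> i j ij.
  have ac : a != c by rewrite eq_sym.
  case: (eqVneq i a) => [Ei|ia]; first subst i.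
    case: (eqVneq j b) => [Ej|jb]; first subst j.
      by apply: Ec.
    by apply: Eb.
  case: (eqVneq j a) => [Ej|ja]; first subst j; last exact: Ea.
  case: (eqVneq i b) => [Ei|ib]; first subst i.
    by apply: Ec.
  by apply: Eb.
move=> i j k l ij kl; rewrite -/(f i j) -/(f k l) (E _ _ ij) (E _ _ kl) //.
Qed.
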